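(* Let $\mu>0$ and $\rho>0$, and let $x\in\mathbb{R}^n$ satisfy $c_i(x)>0$ for all $i=1,\dots,m$. Then $s\mapsto F(x,s;\mu,\rho)$ attains its maximum over $\mathbb{R}^m$ uniquely at $s_i=\mu/c_i(x)$, $i=1,\dots,m$, and $$\max_{s\in\mathbb{R}^m}F(x,s;\mu,\rho)=f(x)-\mu\sum_{i=1}^m\ln c_i(x).$$ Consequently, restricted to points with $c(x)>0$, the minimax problem $\min_x\max_s F(x,s;\mu,\rho)$ reduces to the logarithmic-barrier problem $\min_x f(x)-\mu\sum_{i=1}^m\ln c_i(x)$.
   Context: Let $f:\mathbb{R}^n\to\mathbb{R}$ and $c=(c_1,\dots,c_m):\mathbb{R}^n\to\mathbb{R}^m$ be twice continuously differentiable. For parameters $\mu>0$, $\rho>0$ and variables $x\in\mathbb{R}^n$, $s\in\mathbb{R}^m$, define for $i=1,\dots,m$: $z_i(x,s;\mu,\rho)=\frac{1}{2\rho}\big(\sqrt{(s_i-\rho c_i(x))^2+4\rho\mu}-(s_i-\rho c_i(x))\big)$, $y_i(x,s;\mu,\rho)=\frac{1}{2\rho}\big(\sqrt{(s_i-\rho c_i(x))^2+4\rho\mu}+(s_i-\rho c_i(x))\big)$, $h_i(x,s;\mu,\rho)=-\mu\ln z_i(x,s;\mu,\rho)+\frac{\rho}{2}y_i(x,s;\mu,\rho)^2-\frac{1}{2\rho}s_i^2$, and the augmented Lagrangian $F(x,s;\mu,\rho)=f(x)+\sum_{i=1}^m h_i(x,s;\mu,\rho)$. *)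

(* Defs.v *)
From mathcomp Require Import all_boot all_order all_algebra.
From mathcomp Require Import all_classical all_reals all_analysis.
Set Implicit Arguments. Unset Strict Implicit. Unset Printing Implicit Defensive.
Import Order.TTheory GRing.Theory Num.Theory.
Local Open Scope ring_scope.

Section AugLag.
Variables (R : realType) (n m : nat).
Variables (f : 'rV[R]_n -> R) (c : 'rV[R]_n -> 'I_m -> R).

Definition zi (mu rho : R) (x : 'rV[R]_n) (s : 'I_m -> R) (i : 'I_m) : R :=
  (Num.sqrt ((s i - rho * c x i) ^+ 2 + 4 * rho * mu) - (s i - rho * c x i)) / (2 * rho).

Definition yi (mu rho : R) (x : 'rV[R]_n) (s : 'I_m -> R) (i : 'I_m) : R :=
  (Num.sqrt ((s i - rho * c x i) ^+ 2 + 4 * rho * mu) + (s i - rho * c x i)) / (2 * rho).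

Definition hi (mu rho : R) (x : 'rV[R]_n) (s : 'I_m -> R) (i : 'I_m) : R :=
  - mu * ln (zi mu rho x s i) + rho / 2 * (yi mu rho x s i) ^+ 2 - (s i) ^+ 2 / (2 * rho).

Definition augF (mu rho : R) (x : 'rV[R]_n) (s : 'I_m -> R) : R :=
  f x + \sum_(i < m) hi mu rho x s i.

End AugLag.

(* Main.v *)
Require Import Defs.
From mathcomp Require Import all_boot all_order all_algebra all_classical all_reals all_analysis.
From mathcomp Require Import ring lra.
Import Order.TTheory GRing.Theory Num.Theory.
Local Open Scope ring_scope.

Section L.
Variable R : realType.

Lemma key (mu rho c s : R) : 0 < mu -> 0 < rho -> 0 < c ->
  let t := s - rho * c in
  let D := Num.sqrt (t ^+ 2 + 4 * rho * mu) in
  let z := (D - t) / (2 * rho) in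
  let y := (D + t) / (2 * rho) in
  0 < z /\ s = rho * c + mu / z - rho * z /\
  - mu * ln z + rho / 2 * y ^+ 2 - s ^+ 2 / (2 * rho) =
  - mu * ln z - c * mu / z + mu - rho * (z - c) ^+ 2 / 2.
Proof.
move=> mu0 rho0 c0 t D z y.
have hD2 : D ^+ 2 = t ^+ 2 + 4 * rho * mu.
  by rewrite sqr_sqrtr // addr_ge0 ?sqr_ge0 // !mulr_ge0 // ltW.
have hD0 : 0 <= D by exact: sqrtr_ge0.
have hDt : t < D.
  have : t ^+ 2 < D ^+ 2 by rewrite hD2; nra.
  nra.
have z0 : 0 < z by rewrite /z divr_gt0 ?subr_gt0 //; lra.
have e : (D + t) * (D - t) = 4 * rho * mu.
  have -> : (D + t) * (D - t) = D ^+ 2 - t ^+ 2 by ring.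
  by rewrite hD2; ring.
have hyz : y * z = mu / rho.
  rewrite /y /z mulf_div e; field; by rewrite gt_eqF.
have hy : y = mu / (rho * z).
  apply: (mulIf (lt0r_neq0 z0)); rewrite hyz; field; rewrite ?gt_eqF //.
have hs : s = rho * c + rho * (y - z).
  rewrite /y /z /t; field; by rewrite gt_eqF.
split=> //; split.
  rewrite {1}hs hy; field; by rewrite ?gt_eqF.
rewrite hs hy; field; by rewrite ?gt_eqF.
Qed.

Lemma gbound (mu rho c z : R) : 0 < mu -> 0 < rho -> 0 < c -> 0 < z ->
  - mu * ln z - c * mu / z + mu - rho * (z - c) ^+ 2 / 2 <= - mu * ln c /\
  (- mu * ln z - c * mu / z + mu - rho * (z - c) ^+ 2 / 2 = - mu * ln c -> z = c).
Proof.
move=> mu0 rho0 c0 z0.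
have cz0 : 0 < c / z by rewrite divr_gt0.
have hl : ln c = ln z + ln (c / z).
  by rewrite -lnM ?posrE // mulrC divfK ?gt_eqF.
have hle : ln (c / z) <= c / z - 1.
  have := @le_ln1Dx R (c / z - 1); rewrite addrCA subrr addr0; apply; lra.
have e : - mu * ln z - c * mu / z + mu - rho * (z - c) ^+ 2 / 2 + mu * ln c =
   mu * (ln (c / z) - (c / z - 1)) - rho * (z - c) ^+ 2 / 2.
  rewrite hl; field; by rewrite gt_eqF.
have t1 : mu * (ln (c / z) - (c / z - 1)) <= 0.
  apply: mulr_ge0_le0; [exact: ltW | by rewrite subr_le0].
have t2 : 0 <= rho * (z - c) ^+ 2 / 2.
  apply: divr_ge0 => //; exact: mulr_ge0 (ltW rho0) (sqr_ge0 _).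
split; first lra.
move=> heq.
have t3 : rho * (z - c) ^+ 2 / 2 = 0 by lra.
have : (z - c) ^+ 2 = 0.
  apply: (mulfI (lt0r_neq0 rho0)); rewrite mulr0; lra.
by move/eqP; rewrite sqrf_eq0 subr_eq0 => /eqP.
Qed.

Lemma coord (mu rho c s : R) : 0 < mu -> 0 < rho -> 0 < c ->
  let h := - mu * ln ((Num.sqrt ((s - rho * c) ^+ 2 + 4 * rho * mu) - (s - rho * c)) / (2 * rho))
     + rho / 2 * ((Num.sqrt ((s - rho * c) ^+ 2 + 4 * rho * mu) + (s - rho * c)) / (2 * rho)) ^+ 2
     - s ^+ 2 / (2 * rho) in
  h <= - mu * ln c /\ (h = - mu * ln c <-> s = mu / c).
Proof.
move=> mu0 rho0 c0 h.
have /= [z0 [hs he]] := @key mu rho c s mu0 rho0 c0.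
rewrite /h he.
set z := (_ / (2 * rho)) in z0 hs he *.
have [gl ge] := @gbound mu rho c z mu0 rho0 c0 z0.
split=> //; split.
  by move=> /ge zc; rewrite hs zc; field; rewrite gt_eqF.
move=> sdef.
have zc : z = c.
  have e : (z - c) * (mu / (c * z) + rho) = mu / c - (rho * c + mu / z - rho * z).
    by field; rewrite ?gt_eqF.
  move: e; rewrite -hs sdef subrr => /eqP; rewrite mulf_eq0 => /orP[].
    by rewrite subr_eq0 => /eqP.
  have : 0 < mu / (c * z) + rho by rewrite addr_gt0 // divr_gt0 // mulr_gt0.
  by move=> /gt_eqF ->.
rewrite zc subrr expr0n /= mulr0 mul0r subr0; field; by rewrite gt_eqF.
Qed.
End L.

Theorem theorem3p2 (R : realType) (n m : nat)
  (f : 'rV[R]_n -> R) (c : 'rV[R]_n -> 'I_m -> R)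
  (mu rho : R) (x : 'rV[R]_n) :
  0 < mu -> 0 < rho -> (forall i : 'I_m, 0 < c x i) ->
  let sstar := fun i : 'I_m => mu / c x i in
  (* s* is a maximizer of s |-> F(x,s;mu,rho) over R^m *)
  (forall s : 'I_m -> R, augF f c mu rho x s <= augF f c mu rho x sstar) /\
  (* and it is the unique maximizer *)
  (forall s : 'I_m -> R, augF f c mu rho x sstar <= augF f c mu rho x s ->
     forall i : 'I_m, s i = sstar i) /\
  (* the maximal value is the log-barrier function *)
  augF f c mu rho x sstar = f x - mu * \sum_(i < m) ln (c x i).
Proof.
move=> mu0 rho0 cpos sstar.
have hle s i : hi c mu rho x s i <= - mu * ln (c x i).
  by have [] := @coord R mu rho (c x i) (s i) mu0 rho0 (cpos i).
have heq s i : hi c mu rho x s i = - mu * ln (c x i) <-> s i = sstar i.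
  by have [] := @coord R mu rho (c x i) (s i) mu0 rho0 (cpos i).
have hstar i : hi c mu rho x sstar i = - mu * ln (c x i) by apply/heq.
have p1 s : augF f c mu rho x s <= augF f c mu rho x sstar.
  rewrite /augF lerD2l; apply: ler_sum => i _; rewrite hstar; exact: hle.
split=> //; split.
  move=> s hs i; apply/heq.
  have e : \sum_(j < m) (hi c mu rho x sstar j - hi c mu rho x s j) = 0.
    rewrite sumrB; apply/eqP; rewrite subr_eq0 eq_le.
    have := p1 s; have := hs; rewrite /augF !lerD2l => -> ->; by [].
  have nn : forall j : 'I_m, true -> 0 <= hi c mu rho x sstar j - hi c mu rho x s j.
    by move=> j _; rewrite subr_ge0 hstar hle.
  have := psumr_eq0P nn e (i:=i) isT => /eqP; rewrite subr_eq0 hstar.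
  by move/eqP ->.
rewrite /augF (eq_bigr _ (fun i _ => hstar i)) -mulr_sumr mulNr.
by [].
Qed.
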